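(* Let $X$ be a real linear space, $T$ an infinite index set, and $f, f_t : X \to \overline{\mathbb{R}} := \mathbb{R}\cup\{\pm\infty\}$ ($t \in T$) convex proper functions. Let $M := \bigcap_{t\in T} \operatorname{dom} f_t$, $h:=\sup_{t\in T} f_t$, $\Delta_1 := \operatorname{dom} f\cap\operatorname{dom} h$, and define $$\sup(D) := \sup_{\lambda\in\mathbb{R}_+^{(T)}} \inf_{x\in M}\Big(f(x)+\sum_{t\in T}\lambda_t f_t(x)\Big),\qquad \sup(D_1) := \sup_{s\ge0}\inf_{x\in\Delta_1}\big(f(x)+s\,h(x)\big),$$ and $\inf(P):=\inf\{f(x): f_t(x)\le 0 \text{ for all } t\in T\}$. Then $$\sup(D)\le\sup(D_1)\le\inf(P).$$
   Context: $\operatorname{dom} g := \{x : g(x)<+\infty\}$; a proper function never takes the value $-\infty$ and has nonempty domain. $\mathbb{R}^{(T)}$ is the space of functions $\lambda=(\lambda_t)_{t\in T}:T\to\mathbb{R}$ with finite support $\operatorname{supp}\lambda=\{t:\lambda_t\neq0\}$, and $\mathbb{R}^{(T)}_+$ its elements with all $\lambda_t\ge0$; $\sum_{t\in T}\lambda_t f_t(x)$ means $\sum_{t\in\operatorname{supp}\lambda}\lambda_t f_t(x)$ if $\lambda\ne 0$ and $0$ if $\lambda=0$. Conventions: $\inf\emptyset=+\infty$, $\sup\emptyset=-\infty$. *)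

(* Defs.v *)
From HB Require Import structures.
From mathcomp Require Import all_boot all_order all_algebra.
From mathcomp Require Import all_classical all_reals ereal.
Set Implicit Arguments. Unset Strict Implicit. Unset Printing Implicit Defensive.
Import Order.TTheory GRing.Theory Num.Theory.
Local Open Scope classical_set_scope.
Local Open Scope ring_scope.
Local Open Scope ereal_scope.

Definition edom (R : realType) (X : Type) (g : X -> \bar R) : set X :=
  [set x | g x < +oo].

Definition proper_fun (R : realType) (X : Type) (g : X -> \bar R) : Prop :=
  (forall x, g x <> -oo) /\ (exists x, g x < +oo).

(* convexity of an extended-real-valued function = convexity of its epigraph *)
Definition convex_efun (R : realType) (X : lmodType R) (g : X -> \bar R) : Prop :=
  forall (x y : X) (r s a : R), g x <= r%:E -> g y <= s%:E ->
    (0 <= a <= 1)%R ->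
    g (a *: x + (1 - a) *: y)%R <= (a * r + (1 - a) * s)%:E.

Definition supp (R : realType) (T : Type) (lam : T -> R) : set T :=
  [set t | lam t != 0%R].

Definition fin_nonneg (R : realType) (T : Type) (lam : T -> R) : Prop :=
  finite_set (supp lam) /\ (forall t, (0 <= lam t)%R).

Definition lagr_sum (R : realType) (X : Type) (T : choiceType)
  (ft : T -> X -> \bar R) (lam : T -> R) (x : X) : \bar R :=
  \sum_(t \in supp lam) (lam t)%:E * ft t x.

Definition hsup (R : realType) (X : Type) (T : Type) (ft : T -> X -> \bar R)
  (x : X) : \bar R := ereal_sup [set ft t x | t in [set: T]].

Definition M_dom (R : realType) (X : Type) (T : Type) (ft : T -> X -> \bar R)
  : set X := \bigcap_(t in [set: T]) edom (ft t).

Definition supD (R : realType) (X : Type) (T : choiceType)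
  (f : X -> \bar R) (ft : T -> X -> \bar R) : \bar R :=
  ereal_sup [set ereal_inf [set f x + lagr_sum ft lam x | x in M_dom ft]
            | lam in [set lam : T -> R | fin_nonneg lam]].

Definition supD1 (R : realType) (X : Type) (T : Type)
  (f : X -> \bar R) (ft : T -> X -> \bar R) : \bar R :=
  ereal_sup [set ereal_inf [set f x + s%:E * hsup ft x
                           | x in edom f `&` edom (hsup ft)]
            | s in [set s : R | (0 <= s)%R]].

Definition infP (R : realType) (X : Type) (T : Type)
  (f : X -> \bar R) (ft : T -> X -> \bar R) : \bar R :=
  ereal_inf [set f x | x in [set x | forall t, ft t x <= 0]].

(* Main.v *)
Require Import Defs.
From HB Require Import structures.
From mathcomp Require Import all_boot all_order all_algebra.
From mathcomp Require Import all_classical all_reals ereal.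
Local Open Scope classical_set_scope.
Local Open Scope ereal_scope.
Import Order.TTheory GRing.Theory Num.Theory.

Theorem lemma3p1 (R : realType) (X : lmodType R) (T : choiceType)
  (f : X -> \bar R) (ft : T -> X -> \bar R) :
  infinite_set [set: T] ->
  convex_efun f -> proper_fun f ->
  (forall t, convex_efun (ft t)) -> (forall t, proper_fun (ft t)) ->
  supD f ft <= supD1 f ft /\ supD1 f ft <= infP f ft.
Proof.
move=> Tinf _ [fninf _] _ ftp.
have [t0 _] := infinite_setN0 Tinf.
have hub : forall t x, ft t x <= hsup ft x.
  by move=> t x; apply: ereal_sup_ubound; exists t.
split.
- apply: ge_ereal_sup => _ [lam [fin lam0] <-].
  pose s := (\sum_(t <- finmap.enum_fset (fset_set (supp lam))) lam t)%R.
  apply: le_ereal_sup_tmp.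
  exists (ereal_inf [set f x + s%:E * hsup ft x
                           | x in edom f `&` edom (hsup ft)]).
    by exists s => //; apply: sumr_ge0 => t _; apply: lam0.
  apply: le_ereal_inf_tmp => _ [x [dfx dhx] <-].
  apply: ge_ereal_inf; exists (f x + lagr_sum ft lam x).
    exists x => //; move=> t _; rewrite /edom /=.
    move: dhx; rewrite /edom /= => dhx; exact: le_lt_trans (hub t x) dhx.
  apply: leeD2l.
  have : hsup ft x \is a fin_num.
    rewrite fin_numE; apply/andP; split; last by rewrite -ltey.
    apply/eqP => hm; have := hub t0 x; rewrite hm leeNy_eq => /eqP.
    by have [+ _] := ftp t0; apply.
  case Eh: (hsup ft x) => [r| |] // _.
  rewrite /lagr_sum fsbig_finite //= -EFinM /s mulr_suml -sumEFin.
  apply: lee_sum => t _; rewrite EFinM; apply: lee_wpmul2l.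
    by rewrite lee_fin.
  by rewrite -Eh.
- apply: ge_ereal_sup => _ [s s0 <-].
  apply: le_ereal_inf_tmp => _ [x hx <-].
  have hle : hsup ft x <= 0.
    by apply: ge_ereal_sup => _ [t _ <-]; apply: hx.
  have [fxy|fxy] := eqVneq (f x) +oo; first by rewrite fxy leey.
  apply: ge_ereal_inf; exists (f x + s%:E * hsup ft x).
    exists x => //; split; rewrite /edom /= ?ltey //.
    rewrite -ltey; exact: (le_lt_trans hle (ltry 0%R)).
  rewrite -[leRHS]adde0; apply: leeD2l.
  by apply: mule_ge0_le0; rewrite ?lee_fin.
Qed.
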